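(* For every integer $N$ there exists a graph $G$ with $\pi_T(G)-\pi_{T_w}(G)\ge N$; that is, the difference between $\pi_{T_w}$ and $\pi_T$ can be arbitrarily large.
   Context: Graphs are finite and simple. A sequence is nonrepetitive if no block of consecutive terms has the form $r_1\dots r_nr_1\dots r_n$ with $n\ge1$. A weak total Thue colouring of $G$ is a colouring of $V(G)\cup E(G)$ such that for every path $v_1,e_1,v_2,\dots,e_{k-1},v_k$ the sequence of colours of $v_1,e_1,\dots,v_k$ is nonrepetitive; $\pi_{T_w}(G)$ is the minimum number of colours in such a colouring. A (strong) total Thue colouring is a weak total Thue colouring in which additionally the colour sequence of the vertices of every path and the colour sequence of the edges of every path are nonrepetitive; $\pi_T(G)$ is the minimum number of colours in such a colouring. *)

(* Defs.v *)
From mathcomp Require Import all_boot.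
From mathcomp Require Import boolp.

Set Implicit Arguments.
Unset Strict Implicit.
Unset Printing Implicit Defensive.

(* A finite simple graph on vertex set 'I_n is a symmetric irreflexive
   relation e : rel 'I_n.  Colours are natural numbers; a colouring with
   k colours uses colours < k. *)

Definition nonrepetitive (s : seq nat) : Prop :=
  forall a r c : seq nat, s = a ++ r ++ r ++ c -> r = [::].

Section Colourings.
Variable T : finType.
Variable e : rel T.

Definition is_gpath (v : T) (s : seq T) : bool := uniq (v :: s) && path e v s.

Fixpoint total_seq (cv : T -> nat) (ce : T -> T -> nat) (v : T) (s : seq T)
  : seq nat :=
  match s with
  | [::] => [:: cv v]
  | w :: s' => cv v :: ce v w :: total_seq cv ce w s'
  end.

Definition vertex_seq (cv : T -> nat) (v : T) (s : seq T) : seq nat :=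
  map cv (v :: s).
Definition edge_seq (ce : T -> T -> nat) (v : T) (s : seq T) : seq nat :=
  pairmap ce v s.

(* (cv, ce) is a total colouring with k colours: ce is a colouring of the
   (unordered) edges, i.e. symmetric on edges; all colours are < k. *)
Definition total_colouring (k : nat) (cv : T -> nat) (ce : T -> T -> nat)
  : Prop :=
  (forall x, cv x < k) /\
  (forall x y, e x y -> ce x y = ce y x /\ ce x y < k).

Definition weak_total_thue (k : nat) (cv : T -> nat) (ce : T -> T -> nat)
  : Prop :=
  total_colouring k cv ce /\
  forall v s, is_gpath v s -> nonrepetitive (total_seq cv ce v s).

Definition strong_total_thue (k : nat) (cv : T -> nat) (ce : T -> T -> nat)
  : Prop :=
  weak_total_thue k cv ce /\
  forall v s, is_gpath v s ->
    nonrepetitive (vertex_seq cv v s) /\ nonrepetitive (edge_seq ce v s).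

End Colourings.

(* Least natural number satisfying P (0 if there is none). *)
Lemma ex_asbool_nat (P : nat -> Prop) :
  (exists k, P k) -> exists k, `[< P k >].
Proof. by move=> [k Hk]; exists k; apply/asboolP. Qed.

Definition min_nat (P : nat -> Prop) : nat :=
  match pselect (exists k, P k) with
  | left h => ex_minn (ex_asbool_nat h)
  | right _ => 0
  end.

Definition pi_Tw (T : finType) (e : rel T) : nat :=
  min_nat (fun k => exists cv ce, weak_total_thue e k cv ce).
Definition pi_T (T : finType) (e : rel T) : nat :=
  min_nat (fun k => exists cv ce, strong_total_thue e k cv ce).

(* Main.v *)
Require Import Defs.
From mathcomp Require Import all_boot.
From mathcomp Require Import boolp.
From mathcomp Require Import zify.
Lemma nonrep_crit (s : seq nat) :
  (forall i l, 0 < l -> i + l + l <= size s ->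
     exists2 j, j < l & nth 0 s (i + j) != nth 0 s (i + l + j)) ->
  nonrepetitive s.
Proof.
move=> H a r c Es; case: (r =P [::]) => // /eqP Hr; exfalso.
have [||j Hj] := H (size a) (size r); first by rewrite lt0n size_eq0.
  by rewrite Es !size_cat addnA addnA leq_addr.
have E1 : nth 0 s (size a + j) = nth 0 r j.
  by rewrite Es nth_cat ltnNge leq_addr /= addKn nth_cat Hj.
have E2 : nth 0 s (size a + size r + j) = nth 0 r j.
  rewrite Es nth_cat ltnNge -addnA leq_addr /= addKn nth_cat ltnNge leq_addr /=.
  by rewrite addKn nth_cat Hj.
by rewrite E1 E2 eqxx.
Qed.

Lemma nonrep1 x : nonrepetitive [:: x].
Proof.
apply: nonrep_crit => i [|[|l]] //= _; rewrite ?addnS ?addSn ?ltnS //.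
Qed.

Lemma nonrep2 x y : x != y -> nonrepetitive [:: x; y].
Proof.
move=> H; apply: nonrep_crit => -[|i] [|[|l]] //= _ Hs; try by exists 0.
all: move: Hs; rewrite !(addnS, addSn) //.
Qed.

Lemma nonrep3 x y z : x != y -> y != z -> nonrepetitive [:: x; y; z].
Proof.
move=> H1 H2; apply: nonrep_crit => -[|[|i]] [|[|l]] //= _ Hs; try by exists 0.
all: move: Hs; rewrite !(addnS, addSn) //.
Qed.

Lemma nonrep5 a b c d f : a != b -> b != c -> c != d -> d != f ->
  (a != c) || (b != d) -> (b != d) || (c != f) ->
  nonrepetitive [:: a; b; c; d; f].
Proof.
move=> H1 H2 H3 H4 H5 H6; apply: nonrep_crit => i l.
case: l => [|[|[|l]]] //= _ Hs.
- case: i Hs => [|[|[|[|i]]]] Hs; try by exists 0.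
  by move: Hs; rewrite !(addnS, addSn).
- case: i Hs => [|[|i]] Hs.
  + case/orP: H5 => H; [by exists 0 | by exists 1].
  + case/orP: H6 => H; [by exists 0 | by exists 1].
  + by move: Hs; rewrite !(addnS, addSn).
- by move: Hs; rewrite !(addnS, addSn).
Qed.

Section Star.
Variable m : nat.
Definition T := 'I_m.+1.
Definition star : rel T := fun x y => (x == ord0) != (y == ord0).

Lemma star_paths (v : T) s : is_gpath star v s ->
  s = [::] \/ (exists w, s = [:: w] /\ star v w) \/
  (exists w u, s = [:: w; u] /\ v != ord0 /\ w = ord0 /\ u != ord0 /\ v != u).
Proof.
rewrite /is_gpath /star.
case: s => [|w [|u [|t s']]] /=; [by left| | |].
- by case/andP=> _ /andP[H _]; right; left; exists w.
- case/and4P=> /and3P[U1 U2 _] H1 H2 _; right; right.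
  move: U1 U2 H1 H2; rewrite !inE.
  case: (boolP (v == ord0)) => Hv; case: (boolP (w == ord0)) => Hw;
  case: (boolP (u == ord0)) => Hu //=;
  rewrite ?(eqP Hv) ?(eqP Hu) ?(eqP Hw) ?eqxx ?orbT //.
  by move=> /norP[_ ?] *; exists ord0, u.
- case/and5P=> /and5P[U1 U2 U3 _ _] H1 H2 H3 _; exfalso.
  move: U1 U2 U3 H1 H2 H3; rewrite !inE.
  case: (boolP (v == ord0)) => Hv; case: (boolP (w == ord0)) => Hw;
  case: (boolP (u == ord0)) => Hu //=; case: (boolP (t == ord0)) => Ht //=;
  rewrite ?(eqP Hv) ?(eqP Hu) ?(eqP Hw) ?(eqP Ht) ?eqxx ?orbT //.
Qed.

Lemma nonrep0 : nonrepetitive [::].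
Proof. by apply: nonrep_crit => i [|l] // _; rewrite addnS. Qed.

Definition cvs (x : T) : nat := if x == ord0 then 0 else 1.

Lemma weak_ok : weak_total_thue star 3 cvs (fun _ _ => 2).
Proof.
split.
  split=> [x|x y _]; last by [].
  by rewrite /cvs; case: (x == ord0).
move=> v s /star_paths [->|[[w [-> H]]|[w [u [-> [Hv [-> [Hu _]]]]]]]] /=.
- exact: nonrep1.
- by apply: nonrep3; rewrite /cvs; [case: (v == ord0)|case: (w == ord0)].
- by rewrite /cvs (negbTE Hv) (negbTE Hu) eqxx; apply: nonrep5.
Qed.

Definition ces (x y : T) : nat := 2 + x + y.

Lemma strong_ok : strong_total_thue star (m + 3) cvs ces.
Proof.
have cvlt x : cvs x < 2 by rewrite /cvs; case: (x == ord0).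
have cegt x y : 2 <= ces x y by rewrite /ces -addnA leq_addr.
have neq1 x y z : cvs x != ces y z.
  by rewrite neq_ltn (leq_trans (cvlt x) (cegt y z)).
have neq2 x y z : ces y z != cvs x by rewrite eq_sym.
split; first split.
- split=> [x|x y Hxy]; first by apply: leq_trans (cvlt x) _; lia.
  split; first by rewrite /ces addnAC.
  move: Hxy; rewrite /star /ces.
  case: (boolP (x == ord0)) => Hx; case: (boolP (y == ord0)) => Hy //= _.
    rewrite (eqP Hx) /=; have := ltn_ord y; lia.
  rewrite (eqP Hy) /=; have := ltn_ord x; lia.
- move=> v s /star_paths [->|[[w [-> H]]|[w [u [-> [Hv [-> [Hu Hvu]]]]]]]] /=.
  + exact: nonrep1.
  + by apply: nonrep3.
  + apply: nonrep5 => //; rewrite /cvs ?(negbTE Hv) ?(negbTE Hu) ?eqxx ?orbT //.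
move=> v s /star_paths [->|[[w [-> H]]|[w [u [-> [Hv [-> [Hu Hvu]]]]]]]].
- by split; [apply: nonrep1|apply: nonrep0].
- split; last by apply: nonrep1.
  apply: nonrep2; move: H; rewrite /star /cvs.
  by case: (v == ord0); case: (w == ord0).
- split.
    by rewrite /vertex_seq /= /cvs (negbTE Hv) (negbTE Hu) eqxx; apply: nonrep3.
  rewrite /edge_seq /= /ces; apply: nonrep2.
  move: Hvu; rewrite -val_eqE /= => Hvu; lia.
Qed.

Lemma strong_lb k cv ce : strong_total_thue star k cv ce -> m <= k.
Proof.
move=> [[[_ Hce] _] Hs].
have Hlt (i : 'I_m) : ce (lift ord0 i) ord0 < k.
  by have := Hce (lift ord0 i) ord0; rewrite /star lift_eqF eqxx => /(_ isT) [].
have Hinj : injective (fun i : 'I_m => Ordinal (Hlt i)).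
  move=> i j /(congr1 val) /= Eij; apply/eqP; apply/negPn/negP => Hij.
  have Hg : is_gpath star (lift ord0 i) [:: ord0; lift ord0 j].
    by rewrite /is_gpath /star /= !inE !lift_eqF /= (inj_eq (@lift_inj _ ord0)) Hij.
  have [_ /(_ [::] [:: ce (lift ord0 i) ord0] [::])] := Hs _ _ Hg.
  move=> H; suff: [:: ce (lift ord0 i) ord0] = [::] by []; apply: H.
  rewrite /edge_seq /= Eij.
  have := Hce (lift ord0 j) ord0; rewrite /star lift_eqF eqxx => /(_ isT) [-> _] //.
by have := leq_card _ Hinj; rewrite !card_ord.
Qed.
End Star.

Lemma min_nat_le (P : nat -> Prop) k : P k -> min_nat P <= k.
Proof.
move=> Pk; rewrite /min_nat; case: pselect => [h|]; last by [].
by case: ex_minnP => j _ /(_ k (asboolT Pk)).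
Qed.

Lemma min_nat_ge (P : nat -> Prop) b :
  (exists k, P k) -> (forall k, P k -> b <= k) -> b <= min_nat P.
Proof.
move=> Hex Hb; rewrite /min_nat; case: pselect => [h|//].
by case: ex_minnP => j /asboolP Pj _; apply: Hb.
Qed.

Theorem mainTheorem4 (N : nat) :
  exists (n : nat) (e : rel 'I_n),
    symmetric e /\ irreflexive e /\ N <= pi_T e - pi_Tw e.
Proof.
exists (N + 3).+1, (star (N + 3)); split; [|split].
- by move=> x y; rewrite /star eq_sym.
- by move=> x; rewrite /star eqxx.
have H1 : pi_Tw (star (N + 3)) <= 3.
  by apply: min_nat_le; exists (@cvs (N+3)), (fun _ _ => 2); apply: weak_ok.
have H2 : N + 3 <= pi_T (star (N + 3)).
  apply: min_nat_ge.
    by exists (N + 3 + 3), (@cvs (N+3)), (@ces (N+3)); apply: strong_ok.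
  by move=> k [cv [ce /strong_lb]].
lia.
Qed.
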